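(* Let $p>3$ be prime, $t\in\{1,3,p,3p\}$, and $1\le r\le 3p-1$ with $\gcd(r,3p)=1$. Then $\Lambda(p,r,t)=\{1\}$ if $r\equiv 2\pmod 3$ and $|r|_p$ is odd, and $\Lambda(p,r,t)=\emptyset$ otherwise.
   Context: $|r|_m$ is the multiplicative order of $r$ modulo $m$ (with $|r|_1=1$). $S_k(x):=1+x+\cdots+x^{k-1}$, $S_0:=0$. For $m\ge1$ with $\gcd(r,m)=1$, $\kappa(m,r,t):=\dfrac{m|r|_m}{\gcd(m,\,tS_{|r|_m}(r))}$. For $d\in\{1,3,p,3p\}$, $\Lambda(d,r,t):=\{\ell>0:\ \ell \text{ divides } \frac{|r|_{3p}}{\gcd(\kappa(d,r,t),|r|_{3p})}\text{ and }\gcd(r^{\ell\kappa(d,r,t)}-1,3p)=d\}$. *)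

(* Defs.v *)
From mathcomp Require Import all_boot.

(* |r|_m : multiplicative order of r modulo m, i.e. the least k >= 1 with
   r^k = 1 (mod m).  Computed by bounded search over 1..m; whenever
   gcd(r,m)=1 (the only case used) the order is <= totient m <= m, so the
   search finds it.  For m = 1 this gives 1, matching |r|_1 = 1. *)
Definition mord (m r : nat) : nat :=
  nth 0 [seq k <- iota 1 m | r ^ k %% m == 1 %% m] 0.

Definition Ssum (k x : nat) : nat := \sum_(i < k) x ^ i.

Definition kappa (m r t : nat) : nat :=
  (m * mord m r) %/ gcdn m (t * Ssum (mord m r) r).

Definition Lambda (p d r t : nat) (l : nat) : bool :=
  [&& 0 < l,
      l %| mord (3 * p) r %/ gcdn (kappa d r t) (mord (3 * p) r)
    & gcdn (r ^ (l * kappa d r t) - 1) (3 * p) == d].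

(* Main.v *)
Require Import Defs.
From mathcomp Require Import all_boot all_solvable.
From mathcomp Require Import zify.
Lemma mord_spec m r : 0 < m -> coprime r m ->
  0 < mord m r /\ (forall k, (r ^ k %% m == 1 %% m) = (mord m r %| k)).
Proof.
move=> m0 co.
set P := fun k => r ^ k %% m == 1 %% m.
set s := [seq k <- iota 1 m | P k].
have Ht : totient m \in s.
  rewrite mem_filter /P mem_iota; apply/andP; split.
    by apply/eqP; apply: Euler_exp_totient.
  have := totient_gt0 m; rewrite m0 => t0.
  have : totient m <= m.
    rewrite totient_count_coprime.
    apply: (@leq_trans (\sum_(0 <= d < m) 1)).
      by apply: leq_sum => i _; exact: leq_b1.
    by rewrite sum_nat_const_nat muln1 subn0.
  lia.
have Hsort : sorted ltn s by apply: sorted_filter => //; [exact: ltn_trans | exact: iota_ltn_sorted].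
have Hmin : forall x, x \in s -> mord m r <= x.
  rewrite /mord -/P -/s.
  move: Hsort; clear Ht; case: s => [//|y s0] /= Hp x.
  rewrite in_cons => /orP [/eqP -> //|xs].
  have := order_path_min ltn_trans Hp => /allP /(_ x xs) H; exact: ltnW.
have Hin : mord m r \in s.
  rewrite /mord -/P -/s; apply: mem_nth; move: Ht; clear; by case: s.
move: (Hin); rewrite mem_filter mem_iota => /andP [HP /andP [o0 om]].
split => // k.
have pw : forall q, r ^ (mord m r * q) %% m = 1 %% m.
  elim=> [|q IH]; first by rewrite muln0.
  by rewrite mulnS expnD -modnMml (eqP HP) modnMml mul1n.
apply/idP/idP; last first.
  by move/dvdnP => [q ->]; rewrite mulnC pw.
move=> Hk.
rewrite /dvdn; apply/negPn/negP => nz.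
have Hr : P (k %% mord m r).
  move: Hk; rewrite /P {1}(divn_eq k (mord m r)) expnD (mulnC (k %/ _)).
  by rewrite -modnMml pw modnMml mul1n.
have : mord m r <= k %% mord m r.
  apply: Hmin; rewrite mem_filter Hr mem_iota /=.
  have := ltn_pmod k o0. rewrite lt0n nz. lia.
by rewrite leqNgt ltn_pmod.
Qed.
Lemma modE m r n : 0 < r -> (r ^ n %% m == 1 %% m) = (m %| r ^ n - 1).
Proof. by move=> r0; rewrite eqn_mod_dvd // expn_gt0 r0. Qed.

Lemma pow2mod3 n : 2 ^ n %% 3 = if odd n then 2 else 1.
Proof.
elim: n => [//|n IH]; rewrite expnS -modnMmr IH /=.
by case: (odd n).
Qed.

Lemma gcd_p p X : prime p -> 3 < p -> p %| X ->
  (gcdn X (3 * p) == p) = ~~ (3 %| X).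
Proof.
move=> Hp p3 /dvdnP [Y ->].
have c3p : coprime 3 p.
  rewrite prime_coprime //; apply/negP => /(primeP Hp).2 /orP [//|/eqP E]; lia.
rewrite mulnC (mulnC 3) -muln_gcdr -[X in _ == X]muln1 eqn_pmul2l ?prime_gt0 //.
rewrite Gauss_dvdr //.
by rewrite -/(coprime Y 3) coprime_sym prime_coprime.
Qed.
Theorem lemma5p4 (p t r : nat) :
  prime p -> 3 < p ->
  t \in [:: 1; 3; p; 3 * p] ->
  1 <= r <= 3 * p - 1 -> coprime r (3 * p) ->
  forall l : nat,
    Lambda p p r t l = [&& r %% 3 == 2, odd (mord p r) & l == 1].
Proof.
move=> Hp p3 _ /andP [r1 _] co l.
have p0 : 0 < p by lia.
have r0 : 0 < r by lia.
have co3 : coprime r 3 by move: co; rewrite coprimeMr => /andP [].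
have cop : coprime r p by move: co; rewrite coprimeMr => /andP [].
have c3p : coprime 3 p.
  rewrite prime_coprime //; apply/negP => /(primeP Hp).2 /orP [//|/eqP E]; lia.
have oddp : odd p.
  have := even_prime Hp; case=> // E; lia.
set o := mord p r.
have [o0 Ho] := mord_spec p r p0 cop.
have h3p : 0 < 3 * p by lia.
have [O0 HO] := mord_spec (3 * p) r h3p co.
rewrite -/o in o0 Ho.
have Hdp : forall n, (p %| r ^ n - 1) = (o %| n) by move=> n; rewrite -Ho modE.
have HdO : forall n, (mord (3 * p) r %| n) = (3 %| r ^ n - 1) && (o %| n).
  by move=> n; rewrite -HO modE // Gauss_dvd // Hdp.
have op : o < p.
  have : o %| p.-1 by rewrite -totient_prime // -Ho; apply/eqP; apply: Euler_exp_totient.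
  move/dvdn_leq; lia.
have r3 : r %% 3 = 1 \/ r %% 3 = 2.
  move: co3; rewrite /coprime -gcdn_modl.
  have : r %% 3 < 3 by rewrite ltn_mod.
  by case: (r %% 3) => [|[|[|]]] //; auto.
have H3 : forall n, (3 %| r ^ n - 1) = (r %% 3 == 1) || ~~ odd n.
  move=> n; rewrite -modE // -modnXm.
  by case: r3 => ->; rewrite ?exp1n ?pow2mod3 //=; case: (odd n).
have HOeq : odd o -> r %% 3 = 2 -> mord (3 * p) r = 2 * o.
  move=> oo r32; apply/eqP; rewrite eqn_dvd HdO H3 r32 /= oddM /= dvdn_mull //=.
  rewrite Gauss_dvd ?coprime2n //.
  have := dvdnn (mord (3 * p) r); rewrite HdO H3 r32 /= => /andP [].
  by rewrite dvdn2 => -> ->.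
have [Hk | Hk] : kappa p r t = o \/ kappa p r t = p * o.
  rewrite /kappa -/o.
  have := (primeP Hp).2 _ (dvdn_gcdl p (t * Ssum o r)) => /orP [] /eqP ->.
    by right; rewrite divn1.
  by left; rewrite mulKn.
all: have Hpd : p %| r ^ (l * kappa p r t) - 1 by rewrite Hdp Hk dvdn_mull // dvdn_mull.
all: rewrite /Lambda (gcd_p _ _ Hp p3 Hpd) Hk.
all: rewrite H3; case: r3 => r3; rewrite r3 /= ?andbF //.
all: rewrite ?oddM ?oddp /=; case oo: (odd o); rewrite ?andbF //= HOeq //.
all: rewrite ?gcdnMl.
all: rewrite ?(mulnC p o) ?(mulnC 2 o) ?gcdnMr -?muln_gcdr.
all: have g2 : gcdn p 2 = 1 by apply/eqP; rewrite -/(coprime p 2) coprimen2.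
all: rewrite ?g2 ?muln1 ?mulKn // negbK andbT.
all: apply/idP/idP => [/and3P [l0 /dvdn_leq l2 ol]|/eqP -> //].
all: move: (l2 isT) l0 ol; clear; case: l => [|[|[|]]] //.
Qed.
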